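(* For $\sigma^2>0$ let $$V(\sigma^2)=\inf\Big\{\sum_{k\in\mathbb Z}k^2x_k^2:\ x\text{ real},\ \sum_kx_k^2=1,\ \sum_kx_kx_{k+1}=\tfrac{1}{\sqrt{1+\sigma^2}}\Big\}$$ (the minimal time spread of a maximally compact sequence with periodic frequency spread $\sigma^2$), and let $\eta_p=\sigma^2V(\sigma^2)$ be the corresponding time-frequency spread. Then for all $\sigma^2>0$, $$\eta_p\ \ge\ \sigma^2\Big(1-\sqrt{\tfrac{\sigma^2}{1+\sigma^2}}\Big).$$ Moreover, there exists $s_0>0$ such that for all $0<\sigma^2\le s_0$, $$\eta_p\ \le\ \frac{\sigma^2}{8}\Big(\frac{\sqrt{1+\sigma^2}}{\sqrt{1+\sigma^2}-1}-\frac12\Big).$$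
   Context: For a unit-norm real sequence centered at time $0$, $\sum_kk^2x_k^2$ is its time spread $\Delta_n^2$, and $\sum_kx_kx_{k+1}=1/\sqrt{1+\sigma^2}$ means its periodic frequency spread $\Delta_{\omega_p}^2=(1-\tau^2)/\tau^2$, $\tau=\sum_kx_kx_{k+1}$, equals $\sigma^2$. *)

(* Defs.v *)
From Stdlib Require Import Reals ZArith.
Open Scope R_scope.

(* Sum over Z of f, taken as the limit of the symmetric partial sums
   sum_{|k|<=N} f k.  For the (nonnegative or absolutely summable) series
   used below this coincides with the usual sum over Z. *)
Definition zterm (f : Z -> R) (n : nat) : R :=
  match n with
  | O => f 0%Z
  | S _ => f (Z.of_nat n) + f (- Z.of_nat n)%Z
  end.

Definition zsum (f : Z -> R) (l : R) : Prop := infinite_sum (zterm f) l.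

Definition time_spreads (s2 : R) (t : R) : Prop :=
  exists x : Z -> R,
    zsum (fun k => x k ^ 2) 1 /\
    zsum (fun k => x k * x (k + 1)%Z) (1 / sqrt (1 + s2)) /\
    zsum (fun k => IZR k ^ 2 * x k ^ 2) t.

Definition is_glb (E : R -> Prop) (m : R) : Prop :=
  (forall t, E t -> m <= t) /\ (forall b, (forall t, E t -> b <= t) -> b <= m).

Definition V_is (s2 v : R) : Prop := is_glb (time_spreads s2) v.

(* Main.v *)
Require Import Defs.
From Stdlib Require Import Reals ZArith Lra Lia Psatz.
Open Scope R_scope.


Fixpoint binom (n k : nat) : R :=
  match n, k with
  | O, O => 1
  | O, S _ => 0
  | S n', O => 1
  | S n', S k' => binom n' k' + binom n' (S k')
  end.

Lemma binom_0r n : binom n 0 = 1.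
Proof. destruct n; reflexivity. Qed.

Lemma binom_big n : forall k, (n < k)%nat -> binom n k = 0.
Proof.
  induction n; intros k Hk; destruct k; try lia; simpl; auto.
  rewrite !IHn by lia. lra.
Qed.

Lemma absorb_A n : forall j, INR (S j) * binom (S n) (S j) = INR (S n) * binom n j.
Proof.
  induction n; intros j.
  - destruct j; simpl; [lra|ring].
  - change (binom (S (S n)) (S j)) with (binom (S n) j + binom (S n) (S j)).
    rewrite Rmult_plus_distr_l, IHn.
    destruct j.
    + rewrite !binom_0r. rewrite !S_INR. simpl. lra.
    + assert (H := IHn j).
      change (binom (S n) (S j)) with (binom n j + binom n (S j)) in *.
      rewrite (S_INR (S j)) in *.
      rewrite (S_INR (S n)).
      nra.
Qed.

Lemma absorb_B n i : (INR (S n) - INR i) * binom (S n) i = INR (S n) * binom n i.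
Proof.
  destruct i.
  - rewrite !binom_0r. simpl. lra.
  - assert (H := absorb_A n i).
    change (binom (S n) (S i)) with (binom n i + binom n (S i)) in *.
    nra.
Qed.

Definition cbz (n : nat) (j : Z) : R :=
  if (j <? 0)%Z then 0 else binom n (Z.to_nat j).

Lemma cbz_pascal n j : cbz (S n) j = cbz n (j - 1) + cbz n j.
Proof.
  unfold cbz.
  destruct (Z.ltb_spec j 0).
  - destruct (Z.ltb_spec (j-1) 0); [|lia]. lra.
  - destruct (Z.ltb_spec (j-1) 0).
    + assert (j = 0%Z) by lia. subst. simpl. rewrite binom_0r. lra.
    + replace (Z.to_nat j) with (S (Z.to_nat (j-1))) by lia. simpl. lra.
Qed.

Definition bn (m : nat) (k : Z) : R := cbz (2 * m) (Z.of_nat m + k).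

Lemma bn_rec m k : bn (S m) k = bn m (k - 1) + 2 * bn m k + bn m (k + 1).
Proof.
  unfold bn.
  replace (2 * S m)%nat with (S (S (2 * m))) by lia.
  rewrite cbz_pascal, !cbz_pascal.
  replace (Z.of_nat (S m) + k - 1 - 1)%Z with (Z.of_nat m + (k-1))%Z by lia.
  replace (Z.of_nat (S m) + k - 1)%Z with (Z.of_nat m + k)%Z by lia.
  replace (Z.of_nat (S m) + k)%Z with (Z.of_nat m + (k+1))%Z by lia.
  lra.
Qed.

Lemma bn_out m k : (Z.of_nat m < Z.abs k)%Z -> bn m k = 0.
Proof.
  intros H. unfold bn, cbz.
  destruct (Z.ltb_spec (Z.of_nat m + k) 0); auto.
  apply binom_big. lia.
Qed.

Lemma bn0 k : bn 0 k = if Z.eq_dec k 0 then 1 else 0.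
Proof.
  unfold bn, cbz. simpl.
  destruct (Z.eq_dec k 0).
  - subst. simpl. reflexivity.
  - destruct (Z.ltb_spec k 0); auto.
    destruct (Z.to_nat k) eqn:E; [lia|]. reflexivity.
Qed.

Definition Zs (N : nat) (f : Z -> R) : R := sum_f_R0 (zterm f) N.

Lemma Zs_0 f : Zs 0 f = f 0%Z.
Proof. reflexivity. Qed.

Lemma Zs_S N f : Zs (S N) f = Zs N f + f (Z.of_nat (S N)) + f (- Z.of_nat (S N))%Z.
Proof.
  unfold Zs. change (sum_f_R0 (zterm f) (S N)) with
    (sum_f_R0 (zterm f) N + (f (Z.of_nat (S N)) + f (- Z.of_nat (S N))%Z)). ring.
Qed.

Lemma Zs_ext N f g : (forall k, f k = g k) -> Zs N f = Zs N g.
Proof.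
  intros H. induction N.
  - rewrite !Zs_0. auto.
  - rewrite !Zs_S, IHN, !H. auto.
Qed.

Lemma Zs_plus N f g : Zs N (fun k => f k + g k) = Zs N f + Zs N g.
Proof.
  induction N.
  - rewrite !Zs_0. auto.
  - rewrite !Zs_S, IHN. lra.
Qed.

Lemma Zs_scal N a f : Zs N (fun k => a * f k) = a * Zs N f.
Proof.
  induction N.
  - rewrite !Zs_0. auto.
  - rewrite !Zs_S, IHN. lra.
Qed.

Lemma Zs_shift N f : Zs N (fun k => f (k + 1)%Z) = Zs N f - f (- Z.of_nat N)%Z + f (Z.of_nat N + 1)%Z.
Proof.
  induction N.
  - rewrite !Zs_0. simpl. lra.
  - rewrite !Zs_S, IHN.
    replace (- Z.of_nat (S N) + 1)%Z with (- Z.of_nat N)%Z by lia.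
    replace (Z.of_nat N + 1)%Z with (Z.of_nat (S N)) by lia.
    lra.
Qed.

Lemma Zs_shiftm N f : Zs N (fun k => f (k - 1)%Z) = Zs N f + f (- Z.of_nat N - 1)%Z - f (Z.of_nat N)%Z.
Proof.
  assert (H := Zs_shift N (fun k => f (k - 1)%Z)). simpl in H.
  rewrite (Zs_ext N (fun k => f (k + 1 - 1)%Z) f) in H.
  2:{ intros k. f_equal. lia. }
  replace (Z.of_nat N + 1 - 1)%Z with (Z.of_nat N) in H by lia.
  lra.
Qed.

Lemma Zs_delta N f : (forall k, k <> 0%Z -> f k = 0) -> Zs N f = f 0%Z.
Proof.
  intros H. induction N.
  - apply Zs_0.
  - rewrite Zs_S, IHN, (H (Z.of_nat (S N))), (H (- Z.of_nat (S N))%Z) by lia. lra.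
Qed.

Lemma Zs_stable M f : (forall k, (Z.of_nat M < Z.abs k)%Z -> f k = 0) ->
  forall N, (M <= N)%nat -> Zs N f = Zs M f.
Proof.
  intros H N HN. induction HN; auto.
  rewrite Zs_S, IHHN, (H (Z.of_nat (S m))), (H (- Z.of_nat (S m))%Z) by lia. lra.
Qed.

Lemma zsum_fin M f : (forall k, (Z.of_nat M < Z.abs k)%Z -> f k = 0) -> zsum f (Zs M f).
Proof.
  intros H eps Heps. exists M. intros n Hn.
  change (sum_f_R0 (zterm f) n) with (Zs n f).
  rewrite (Zs_stable M f H n) by lia. unfold R_dist. rewrite Rminus_diag, Rabs_R0. lra.
Qed.


Lemma gram m : forall m' d N, (m < N)%nat ->
  Zs N (fun k => bn m k * bn m' (k + d)%Z) = bn (m + m') d.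
Proof.
  induction m; intros m' d N HN.
  - rewrite Zs_delta.
    + rewrite bn0. simpl. lra.
    + intros k Hk. rewrite bn0. destruct (Z.eq_dec k 0); [lia|]. lra.
  - set (h1 := fun j => bn m j * bn m' (j + (d + 1))%Z).
    set (h2 := fun j => bn m j * bn m' (j + (d - 1))%Z).
    set (h0 := fun j => bn m j * bn m' (j + d)%Z).
    rewrite (Zs_ext N _ (fun k => (fun k => h1 (k - 1)%Z) k + (fun k => 2 * h0 k) k + h2 (k + 1)%Z)).
    2:{ intros k. unfold h0, h1, h2. rewrite bn_rec. simpl.
        replace (k - 1 + (d + 1))%Z with (k + d)%Z by lia.
        replace (k + 1 + (d - 1))%Z with (k + d)%Z by lia. ring. }
    rewrite (Zs_plus N (fun k => h1 (k - 1)%Z + 2 * h0 k) (fun k => h2 (k + 1)%Z)).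
    rewrite (Zs_plus N (fun k => h1 (k - 1)%Z) (fun k => 2 * h0 k)).
    rewrite Zs_scal, (Zs_shiftm N h1), (Zs_shift N h2).
    unfold h0, h1, h2 at 1 3.
    rewrite !IHm by lia.
    unfold h1, h2.
    rewrite (bn_out m (- Z.of_nat N - 1)%Z), (bn_out m (Z.of_nat N)),
      (bn_out m (- Z.of_nat N)%Z), (bn_out m (Z.of_nat N + 1)%Z) by lia.
    replace (S m + m')%nat with (S (m + m')) by lia.
    rewrite (bn_rec (m + m') d).
    ring.
Qed.

Definition c (M : nat) : R := bn M 0.

Lemma c_binom M : c M = binom (2 * M) M.
Proof. unfold c, bn, cbz. destruct (Z.ltb_spec (Z.of_nat M + 0) 0); [lia|]. f_equal. lia. Qed.

Lemma d_binom M : bn M 1 = binom (2 * M) (S M).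
Proof. unfold bn, cbz. destruct (Z.ltb_spec (Z.of_nat M + 1) 0); [lia|]. f_equal. lia. Qed.

Lemma c_ratio M : INR (S M) * c (S M) = 2 * (2 * INR M + 1) * c M.
Proof.
  rewrite !c_binom.
  replace (2 * S M)%nat with (S (S (2 * M))) by lia.
  assert (H1 := absorb_A (S (2 * M)) M).
  assert (H2 := absorb_B (2 * M) M).
  rewrite !S_INR, mult_INR in *. simpl INR in *.
  nra.
Qed.

Lemma d_ratio M : INR (S M) * bn M 1 = INR M * c M.
Proof.
  rewrite d_binom, c_binom. destruct M.
  - simpl. lra.
  - replace (2 * S M)%nat with (S (S (2 * M))) by lia.
    assert (H1 := absorb_A (S (2 * M)) (S M)).
    assert (H2 := absorb_B (S (2 * M)) (S M)).
    rewrite !S_INR, mult_INR in *. simpl INR in *.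
    nra.
Qed.

Lemma c_pos M : 0 < c M.
Proof.
  induction M.
  - unfold c. rewrite bn0. simpl. lra.
  - assert (H := c_ratio M). assert (0 <= INR M) by apply pos_INR.
    rewrite S_INR in H. nra.
Qed.

Lemma kid a k : IZR k ^ 2 * bn (S a) k
  = INR (S a) ^ 2 * bn (S a) k - 2 * INR (S a) * (2 * INR a + 1) * bn a k.
Proof.
  destruct (Z_lt_le_dec (Z.of_nat (S a)) (Z.abs k)) as [Hb|Hb].
  - rewrite !bn_out by lia. ring.
  - unfold bn, cbz.
    destruct (Z.ltb_spec (Z.of_nat (S a) + k) 0); [lia|].
    destruct (Z.ltb_spec (Z.of_nat a + k) 0).
    + assert (k = - Z.of_nat (S a))%Z by lia. subst k.
      replace (Z.to_nat (Z.of_nat (S a) + - Z.of_nat (S a))) with 0%nat by lia.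
      rewrite binom_0r, opp_IZR, <- INR_IZR_INZ. ring.
    + set (i := Z.to_nat (Z.of_nat a + k)).
      replace (Z.to_nat (Z.of_nat (S a) + k)) with (S i) by lia.
      assert (Hk : IZR k = INR i - INR a).
      { rewrite INR_IZR_INZ, INR_IZR_INZ, <- minus_IZR. f_equal. lia. }
      replace (2 * S a)%nat with (S (S (2 * a))) by lia.
      assert (H1 := absorb_A (S (2 * a)) i).
      assert (H2 := absorb_B (2 * a) i).
      assert (Hi : (i <= S (S (2 * a)))%nat) by lia.
      rewrite Hk. rewrite !S_INR, mult_INR in *. simpl INR in *.
      set (BB := binom (S (S (2 * a))) (S i)) in *.
      set (DD := binom (S (2 * a)) i) in *.
      set (EE := binom (2 * a) i) in *.
      assert (E1 : ((INR a + 1) ^ 2 - (INR i - INR a) ^ 2) * BB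
                   = (2 * INR a + 1 - INR i) * ((INR i + 1) * BB)) by ring.
      rewrite H1 in E1.
      replace ((2 * INR a + 1 - INR i) * (((1 + 1) * INR a + 1 + 1) * DD))
        with ((2 * INR a + 2) * (((1 + 1) * INR a + 1 - INR i) * DD)) in E1 by ring.
      rewrite H2 in E1.
      lra.
Qed.


Lemma zsum_cv f l : zsum f l -> Un_cv (fun N => Zs N f) l.
Proof. intros H; exact H. Qed.

Lemma cv_const (a : R) : Un_cv (fun _ => a) a.
Proof. intros eps He. exists 0%nat. intros. unfold R_dist. rewrite Rminus_diag, Rabs_R0. lra. Qed.

Lemma psi_ineq (x : Z -> R) (cc s g r : R) :
  cc = 2 * g * r -> g + g * r ^ 2 = 1 -> 1 - s = 2 * g * r ^ 2 -> 0 <= g ->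
  forall N, 0 <= Zs N (fun k => x k ^ 2)
     - cc * (Zs N (fun k => x k * x (k + 1)%Z) - x (Z.of_nat N) * x (Z.of_nat N + 1)%Z)
     - s * x 0%Z ^ 2
     - g * r ^ 2 * (x (Z.of_nat N) ^ 2 + x (- Z.of_nat N)%Z ^ 2).
Proof.
  intros Hc H1 H2 Hg N. induction N.
  - rewrite !Zs_0. simpl.
    replace s with (1 - 2 * g * r ^ 2) by lra. ring_simplify. lra.
  - rewrite !Zs_S.
    replace (- Z.of_nat (S N) + 1)%Z with (- Z.of_nat N)%Z by lia.
    replace (Z.of_nat (S N)) with (Z.of_nat N + 1)%Z by lia.
    set (a := x (Z.of_nat N)) in *. set (b := x (Z.of_nat N + 1)%Z).
    set (a' := x (- Z.of_nat N)%Z) in *. set (b' := x (- (Z.of_nat N + 1))%Z).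
    set (e := x (Z.of_nat N + 1 + 1)%Z).
    set (S1 := Zs N (fun k => x k ^ 2)) in *.
    set (S2 := Zs N (fun k => x k * x (k + 1)%Z)) in *.
    assert (E : S1 + b ^ 2 + b' ^ 2 - cc * (S2 + b * e + b' * a' - b * e) - s * x 0%Z ^ 2
       - g * r ^ 2 * (b ^ 2 + b' ^ 2)
       = (S1 - cc * (S2 - a * b) - s * x 0%Z ^ 2 - g * r ^ 2 * (a ^ 2 + a' ^ 2))
         + g * (b - r * a) ^ 2 + g * (b' - r * a') ^ 2
         + (1 - g - g * r ^ 2) * (b ^ 2 + b' ^ 2) - (cc - 2 * g * r) * (a * b + b' * a')) by ring.
    rewrite E. replace (1 - g - g * r ^ 2) with 0 by lra. replace (cc - 2 * g * r) with 0 by lra.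
    assert (0 <= g * (b - r * a) ^ 2) by (apply Rmult_le_pos; [lra| apply pow2_ge_0]).
    assert (0 <= g * (b' - r * a') ^ 2) by (apply Rmult_le_pos; [lra| apply pow2_ge_0]).
    fold b in IHN. lra.
Qed.

Lemma terms_cv0 (x : Z -> R) : zsum (fun k => x k ^ 2) 1 ->
  Un_cv (fun N => x (Z.of_nat N) * x (Z.of_nat N + 1)%Z) 0.
Proof.
  intros H eps He.
  destruct (H (eps / 2)) as [N0 HN0]; [lra|].
  exists (S N0). intros n Hn.
  assert (A1 := HN0 n ltac:(lia)).
  assert (A2 := HN0 (pred n) ltac:(lia)).
  assert (A3 := HN0 (S n) ltac:(lia)).
  unfold Rdist in *. unfold R_dist.
  change (sum_f_R0 (zterm (fun k => x k ^ 2)) n) with (Zs n (fun k => x k ^ 2)) in A1.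
  change (sum_f_R0 (zterm (fun k => x k ^ 2)) (pred n)) with (Zs (pred n) (fun k => x k ^ 2)) in A2.
  change (sum_f_R0 (zterm (fun k => x k ^ 2)) (S n)) with (Zs (S n) (fun k => x k ^ 2)) in A3.
  rewrite Zs_S in A3.
  destruct n; [lia|]. simpl pred in A2. rewrite Zs_S in A1. rewrite Zs_S in A3.
  replace (Z.of_nat (S (S n))) with (Z.of_nat (S n) + 1)%Z in A3 by lia.
  set (u := x (Z.of_nat (S n))) in *. set (v := x (Z.of_nat (S n) + 1)%Z) in *.
  set (w := x (- Z.of_nat (S n))%Z) in *. set (w' := x (- (Z.of_nat (S n) + 1))%Z) in *.
  set (S1 := Zs n (fun k => x k ^ 2)) in *.
  assert (0 <= w ^ 2) by apply pow2_ge_0.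
  assert (0 <= w' ^ 2) by apply pow2_ge_0.
  assert (0 <= u ^ 2) by apply pow2_ge_0.
  assert (0 <= v ^ 2) by apply pow2_ge_0.
  apply Rabs_def2 in A1. apply Rabs_def2 in A2. apply Rabs_def2 in A3.
  assert (u ^ 2 < eps) by lra. assert (v ^ 2 < eps) by lra.
  assert (0 <= (u - v) ^ 2) by apply pow2_ge_0. assert (0 <= (u + v) ^ 2) by apply pow2_ge_0.
  rewrite Rminus_0_r. apply Rabs_def1; nra.
Qed.

Lemma lower_x0 (x : Z -> R) (tau cc s : R) :
  zsum (fun k => x k ^ 2) 1 -> zsum (fun k => x k * x (k + 1)%Z) tau ->
  0 < cc -> 0 <= s -> cc ^ 2 + s ^ 2 = 1 ->
  cc * tau + s * x 0%Z ^ 2 <= 1.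
Proof.
  intros H1 H2 Hc Hs Hcs.
  set (g := (1 + s) / 2). set (r := cc / (1 + s)).
  assert (Eg1 : cc = 2 * g * r) by (unfold g, r; field; lra).
  assert (Eg2 : g + g * r ^ 2 = 1).
  { unfold g, r. field_simplify; [|lra]. replace (cc ^ 2) with (1 - s ^ 2) by lra. field. lra. }
  assert (Eg3 : 1 - s = 2 * g * r ^ 2).
  { unfold g, r. field_simplify; [|lra]. replace (cc ^ 2) with (1 - s ^ 2) by lra. field. lra. }
  assert (Hg : 0 <= g) by (unfold g; lra).
  assert (P := psi_ineq x cc s g r Eg1 Eg2 Eg3 Hg).
  assert (L : 0 <= 1 - cc * (tau - 0) - s * x 0%Z ^ 2).
  { apply (@Rle_cv_lim (fun _ => 0)
      (fun N => Zs N (fun k => x k ^ 2)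
         - cc * (Zs N (fun k => x k * x (k + 1)%Z) - x (Z.of_nat N) * x (Z.of_nat N + 1)%Z)
         - s * x 0%Z ^ 2)).
    - intros N. assert (Q := P N).
      assert (0 <= g * r ^ 2 * (x (Z.of_nat N) ^ 2 + x (- Z.of_nat N)%Z ^ 2)).
      { apply Rmult_le_pos; [apply Rmult_le_pos; [lra|apply pow2_ge_0]|].
        assert (T1 := pow2_ge_0 (x (Z.of_nat N))). assert (T2 := pow2_ge_0 (x (- Z.of_nat N)%Z)). lra. }
      lra.
    - apply cv_const.
    - apply CV_minus; [apply CV_minus|].
      + apply zsum_cv, H1.
      + apply (CV_mult (fun _ => cc)); [apply cv_const|].
        apply CV_minus; [apply zsum_cv, H2| apply terms_cv0, H1].
      + apply cv_const. }
  lra.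
Qed.

Lemma spread_ge (x : Z -> R) (T : R) :
  zsum (fun k => x k ^ 2) 1 -> zsum (fun k => IZR k ^ 2 * x k ^ 2) T ->
  1 - x 0%Z ^ 2 <= T.
Proof.
  intros H1 H3.
  apply (@Rle_cv_lim (fun N => Zs N (fun k => x k ^ 2) - x 0%Z ^ 2)
                    (fun N => Zs N (fun k => IZR k ^ 2 * x k ^ 2))).
  - intros N. induction N.
    + rewrite !Zs_0. simpl. lra.
    + rewrite !Zs_S.
      assert (1 <= IZR (Z.of_nat (S N)) ^ 2).
      { rewrite <- INR_IZR_INZ, S_INR. assert (0 <= INR N) by apply pos_INR. nra. }
      assert (1 <= IZR (- Z.of_nat (S N))%Z ^ 2).
      { rewrite opp_IZR, <- INR_IZR_INZ, S_INR. assert (0 <= INR N) by apply pos_INR. nra. }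
      assert (T1 := pow2_ge_0 (x (Z.of_nat (S N)))). assert (T2 := pow2_ge_0 (x (- Z.of_nat (S N))%Z)).
      nra.
  - apply CV_minus; [apply zsum_cv, H1| apply cv_const].
  - apply zsum_cv, H3.
Qed.

Lemma spread_nonneg (x : Z -> R) (T : R) :
  zsum (fun k => IZR k ^ 2 * x k ^ 2) T -> 0 <= T.
Proof.
  intros H3.
  apply (@Rle_cv_lim (fun _ => 0) (fun N => Zs N (fun k => IZR k ^ 2 * x k ^ 2))).
  - intros N. induction N.
    + rewrite !Zs_0. simpl. lra.
    + rewrite !Zs_S.
      assert (T1 := pow2_ge_0 (IZR (Z.of_nat (S N)) * x (Z.of_nat (S N)))).
      assert (T2 := pow2_ge_0 (IZR (- Z.of_nat (S N))%Z * x (- Z.of_nat (S N))%Z)).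
      rewrite Rpow_mult_distr in T1, T2. lra.
  - apply cv_const.
  - apply zsum_cv, H3.
Qed.


Lemma realize (y : Z -> R) (N : nat) (s2 : R) :
  (forall k, (Z.of_nat N < Z.abs k)%Z -> y k = 0) ->
  0 < Zs N (fun k => y k ^ 2) ->
  Zs N (fun k => y k * y (k + 1)%Z) = 1 / sqrt (1 + s2) * Zs N (fun k => y k ^ 2) ->
  time_spreads s2 (Zs N (fun k => IZR k ^ 2 * y k ^ 2) / Zs N (fun k => y k ^ 2)).
Proof.
  intros Hs HX HC.
  set (q := 1 / sqrt (1 + s2)) in *.
  set (X := Zs N (fun k => y k ^ 2)) in *.
  assert (Hq : sqrt X ^ 2 = X) by (apply pow2_sqrt; lra).
  assert (Hsq : 0 < sqrt X) by (apply sqrt_lt_R0; lra).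
  exists (fun k => y k / sqrt X).
  split; [|split].
  - replace 1 with (Zs N (fun k => (y k / sqrt X) ^ 2)).
    + apply zsum_fin. intros k Hk. rewrite Hs by auto. unfold Rdiv. ring.
    + rewrite (Zs_ext N _ (fun k => / X * y k ^ 2)).
      * rewrite Zs_scal. fold X. field. lra.
      * intros k. unfold Rdiv. rewrite Rpow_mult_distr, pow_inv, Hq. ring.
  - replace (1 / sqrt (1 + s2)) with (Zs N (fun k => y k / sqrt X * (y (k + 1)%Z / sqrt X))).
    + apply zsum_fin. intros k Hk. rewrite (Hs k) by auto. unfold Rdiv. ring.
    + rewrite (Zs_ext N _ (fun k => / X * (y k * y (k + 1)%Z))).
      * rewrite Zs_scal, HC. fold X. fold q. field. lra.
      * intros k. replace (/ X) with (/ (sqrt X ^ 2)) by (rewrite Hq; auto). field. lra.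
  - replace (Zs N (fun k => IZR k ^ 2 * y k ^ 2) / X)
      with (Zs N (fun k => IZR k ^ 2 * (y k / sqrt X) ^ 2)).
    + apply zsum_fin. intros k Hk. rewrite Hs by auto. unfold Rdiv. ring.
    + rewrite (Zs_ext N _ (fun k => / X * (IZR k ^ 2 * y k ^ 2))).
      * rewrite Zs_scal. unfold Rdiv. ring.
      * intros k. replace (/ X) with (/ (sqrt X ^ 2)) by (rewrite Hq; auto). field. lra.
Qed.

Definition comb3 (a0 a1 a2 : R) (u0 u1 u2 : Z -> R) (k : Z) : R :=
  a0 * u0 k + a1 * u1 k + a2 * u2 k.

Lemma comb3_sq N a0 a1 a2 u0 u1 u2 :
  Zs N (fun k => comb3 a0 a1 a2 u0 u1 u2 k ^ 2) =
    a0 * a0 * Zs N (fun k => u0 k * u0 k) + a0 * a1 * Zs N (fun k => u0 k * u1 k)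
  + a0 * a2 * Zs N (fun k => u0 k * u2 k) + a1 * a0 * Zs N (fun k => u1 k * u0 k)
  + a1 * a1 * Zs N (fun k => u1 k * u1 k) + a1 * a2 * Zs N (fun k => u1 k * u2 k)
  + a2 * a0 * Zs N (fun k => u2 k * u0 k) + a2 * a1 * Zs N (fun k => u2 k * u1 k)
  + a2 * a2 * Zs N (fun k => u2 k * u2 k).
Proof.
  rewrite <- !Zs_scal, <- !Zs_plus. apply Zs_ext. intros k. unfold comb3. ring.
Qed.

Lemma comb3_sh N a0 a1 a2 u0 u1 u2 :
  Zs N (fun k => comb3 a0 a1 a2 u0 u1 u2 k * comb3 a0 a1 a2 u0 u1 u2 (k + 1)%Z) =
    a0 * a0 * Zs N (fun k => u0 k * u0 (k + 1)%Z) + a0 * a1 * Zs N (fun k => u0 k * u1 (k + 1)%Z)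
  + a0 * a2 * Zs N (fun k => u0 k * u2 (k + 1)%Z) + a1 * a0 * Zs N (fun k => u1 k * u0 (k + 1)%Z)
  + a1 * a1 * Zs N (fun k => u1 k * u1 (k + 1)%Z) + a1 * a2 * Zs N (fun k => u1 k * u2 (k + 1)%Z)
  + a2 * a0 * Zs N (fun k => u2 k * u0 (k + 1)%Z) + a2 * a1 * Zs N (fun k => u2 k * u1 (k + 1)%Z)
  + a2 * a2 * Zs N (fun k => u2 k * u2 (k + 1)%Z).
Proof.
  rewrite <- !Zs_scal, <- !Zs_plus. apply Zs_ext. intros k. unfold comb3. ring.
Qed.

Lemma comb3_k N a0 a1 a2 u0 u1 u2 :
  Zs N (fun k => IZR k ^ 2 * comb3 a0 a1 a2 u0 u1 u2 k ^ 2) =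
    a0 * a0 * Zs N (fun k => IZR k ^ 2 * u0 k * u0 k) + a0 * a1 * Zs N (fun k => IZR k ^ 2 * u0 k * u1 k)
  + a0 * a2 * Zs N (fun k => IZR k ^ 2 * u0 k * u2 k) + a1 * a0 * Zs N (fun k => IZR k ^ 2 * u1 k * u0 k)
  + a1 * a1 * Zs N (fun k => IZR k ^ 2 * u1 k * u1 k) + a1 * a2 * Zs N (fun k => IZR k ^ 2 * u1 k * u2 k)
  + a2 * a0 * Zs N (fun k => IZR k ^ 2 * u2 k * u0 k) + a2 * a1 * Zs N (fun k => IZR k ^ 2 * u2 k * u1 k)
  + a2 * a2 * Zs N (fun k => IZR k ^ 2 * u2 k * u2 k).
Proof.
  rewrite <- !Zs_scal, <- !Zs_plus. apply Zs_ext. intros k. unfold comb3. ring.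
Qed.

Lemma gram0 m m' N : (m < N)%nat -> Zs N (fun k => bn m k * bn m' k) = c (m + m').
Proof.
  intros H. unfold c. rewrite <- (gram m m' 0 N H). apply Zs_ext. intros k. rewrite Z.add_0_r. auto.
Qed.

Lemma gram1 m m' N : (m < N)%nat -> Zs N (fun k => bn m k * bn m' (k + 1)%Z) = bn (m + m') 1.
Proof. apply gram. Qed.

Lemma gramK a m' N : (S a < N)%nat -> Zs N (fun k => IZR k ^ 2 * bn (S a) k * bn m' k)
  = INR (S a) ^ 2 * c (S a + m') - 2 * INR (S a) * (2 * INR a + 1) * c (a + m').
Proof.
  intros H.
  rewrite (Zs_ext N _ (fun k => INR (S a) ^ 2 * (bn (S a) k * bn m' k)
                          + (- (2 * INR (S a) * (2 * INR a + 1))) * (bn a k * bn m' k))).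
  - rewrite Zs_plus, !Zs_scal, !gram0 by lia. ring.
  - intros k. rewrite kid. ring.
Qed.

Lemma comb3_support N a0 a1 a2 m0 m1 m2 :
  (m0 <= N)%nat -> (m1 <= N)%nat -> (m2 <= N)%nat ->
  forall k, (Z.of_nat N < Z.abs k)%Z -> comb3 a0 a1 a2 (bn m0) (bn m1) (bn m2) k = 0.
Proof.
  intros H0 H1 H2 k Hk. unfold comb3. rewrite !bn_out by lia. ring.
Qed.

Lemma exists_ts (s2 : R) : 0 < s2 -> exists t, time_spreads s2 t.
Proof.
  intros Hs2.
  set (tau := 1 / sqrt (1 + s2)).
  assert (Hq1 : 1 < sqrt (1 + s2)).
  { assert (H := sqrt_lt_1_alt 1 (1 + s2) ltac:(lra)). rewrite sqrt_1 in H. exact H. }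
  assert (Ht0 : 0 < tau) by (unfold tau; apply Rdiv_lt_0_compat; lra).
  assert (Ht1 : tau < 1).
  { unfold tau. apply (Rmult_lt_reg_r (sqrt (1 + s2))); [lra|]. field_simplify; lra. }
  set (z := tau / (2 * (1 - tau))).
  destruct (archimed z) as [Hz1 _].
  assert (Hz0 : 0 < z) by (unfold z; apply Rdiv_lt_0_compat; lra).
  set (m := Z.to_nat (up z)).
  assert (Hm : z < INR m).
  { unfold m. rewrite INR_IZR_INZ, Z2Nat.id; [lra|]. apply le_IZR. lra. }
  assert (Hmt : tau * INR (S (m + m)) <= INR (m + m)).
  { rewrite S_INR, plus_INR. assert (Ez : tau = z * (2 * (1 - tau))) by (unfold z; field; lra).
    nra. }
  set (F := fun t => (1 - t) * (1 - t) * c (0 + 0) + (1 - t) * t * c (0 + m) + (1 - t) * t * c (m + 0)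
                 + t * t * c (m + m)).
  set (Gf := fun t => (1 - t) * (1 - t) * bn (0 + 0) 1 + (1 - t) * t * bn (0 + m) 1
                 + (1 - t) * t * bn (m + 0) 1 + t * t * bn (m + m) 1).
  destruct (IVT_cor (fun t => Gf t - tau * F t) 0 1) as [t [Ht Hf]].
  - unfold Gf, F. reg.
  - lra.
  - unfold Gf, F. replace (0 + 0)%nat with 0%nat by lia.
    unfold c. rewrite !bn0. simpl.
    assert (H := d_ratio (m + m)). fold (c (m + m)) in H.
    assert (Hc := c_pos (m + m)).
    assert (0 <= INR (m + m)) by apply pos_INR.
    rewrite S_INR in H, Hmt.
    assert (0 <= bn (m + m) 1 - tau * c (m + m)) by nra.
    fold (c (m + m)).
    match goal with |- ?L <= 0 => replace L with (- tau * (bn (m + m) 1 - tau * c (m + m))) by ring end.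
    nra.
  - set (y := comb3 (1 - t) t 0 (bn 0) (bn m) (bn 0)).
    assert (HX : Zs (S m) (fun k => y k ^ 2) = F t).
    { unfold y. rewrite comb3_sq, !gram0 by lia. unfold F. ring. }
    assert (HY : Zs (S m) (fun k => y k * y (k + 1)%Z) = Gf t).
    { unfold y. rewrite comb3_sh, !gram1 by lia. unfold Gf. ring. }
    assert (HXp : 0 < F t).
    { unfold F. replace (0 + 0)%nat with 0%nat by lia. unfold c at 1. rewrite bn0. simpl.
      assert (H1 := c_pos m). assert (H2 := c_pos (m + 0)). assert (H3 := c_pos (m + m)).
      assert (0 <= (1 - t) * t) by nra. assert (0 <= (1 - t) * (1 - t)) by nra.
      assert (0 <= (1 - t) * t * c m) by nra. assert (0 <= (1 - t) * t * c (m + 0)) by nra.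
      destruct (Req_dec t 0). { subst. lra. }
      assert (0 < t * t) by nra. assert (0 < t * t * c (m + m)) by nra. lra. }
    eexists. apply (realize y (S m)).
    + apply comb3_support; lia.
    + lra.
    + rewrite HX, HY. fold tau. lra.
Qed.


Definition nn (x : R) : R := x + 3.
Definition al0 (x t : R) : R := 2 * nn x ^ 2 * (nn x - 1).
Definition al1 (x t : R) : R := 2 * (2 * nn x - 1) * (nn x - 1) * (15 * t - 4 * nn x).
Definition al2 (x t : R) : R := 8 * (2 * nn x - 1) * (2 * nn x - 3) * (nn x + 4 - 6 * t).
Definition W5 (x : R) : R := (2 * nn x - 4) * (2 * nn x - 3) * (2 * nn x - 2) * (2 * nn x - 1) * (2 * nn x).
Definition W4 (x : R) : R := 2 * (4 * nn x - 9) * (2 * nn x - 3) * (2 * nn x - 2) * (2 * nn x - 1) * (2 * nn x).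
Definition W3 (x : R) : R := 2 * (4 * nn x - 9) * (2 * (4 * nn x - 7)) * (2 * nn x - 2) * (2 * nn x - 1) * (2 * nn x).
Definition W2 (x : R) : R := 2 * (4 * nn x - 9) * (2 * (4 * nn x - 7)) * (2 * (4 * nn x - 5)) * (2 * nn x - 1) * (2 * nn x).
Definition W1 (x : R) : R := 2 * (4 * nn x - 9) * (2 * (4 * nn x - 7)) * (2 * (4 * nn x - 5)) * (2 * (4 * nn x - 3)) * (2 * nn x).
Definition W0 (x : R) : R := 2 * (4 * nn x - 9) * (2 * (4 * nn x - 7)) * (2 * (4 * nn x - 5)) * (2 * (4 * nn x - 3)) * (2 * (4 * nn x - 1)).
Definition Fd (x : R) : R := (2 * nn x + 1) * (2 * nn x) * (2 * nn x - 1) * (2 * nn x - 2) * (2 * nn x - 3).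
Definition PN (x t : R) : R :=
  al0 x t * al0 x t * W0 x
  + al0 x t * al1 x t * W1 x
  + al0 x t * al2 x t * W2 x
  + al1 x t * al0 x t * W1 x
  + al1 x t * al1 x t * W2 x
  + al1 x t * al2 x t * W3 x
  + al2 x t * al0 x t * W2 x
  + al2 x t * al1 x t * W3 x
  + al2 x t * al2 x t * W4 x.
Definition PC (x t : R) : R :=
  al0 x t * al0 x t * W0 x * (2 * nn x - 0) * (2 * nn x + 1 - 1) * (2 * nn x + 1 - 2) * (2 * nn x + 1 - 3) * (2 * nn x + 1 - 4)
  + al0 x t * al1 x t * W1 x * (2 * nn x - 1) * (2 * nn x + 1 - 0) * (2 * nn x + 1 - 2) * (2 * nn x + 1 - 3) * (2 * nn x + 1 - 4)
  + al0 x t * al2 x t * W2 x * (2 * nn x - 2) * (2 * nn x + 1 - 0) * (2 * nn x + 1 - 1) * (2 * nn x + 1 - 3) * (2 * nn x + 1 - 4)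
  + al1 x t * al0 x t * W1 x * (2 * nn x - 1) * (2 * nn x + 1 - 0) * (2 * nn x + 1 - 2) * (2 * nn x + 1 - 3) * (2 * nn x + 1 - 4)
  + al1 x t * al1 x t * W2 x * (2 * nn x - 2) * (2 * nn x + 1 - 0) * (2 * nn x + 1 - 1) * (2 * nn x + 1 - 3) * (2 * nn x + 1 - 4)
  + al1 x t * al2 x t * W3 x * (2 * nn x - 3) * (2 * nn x + 1 - 0) * (2 * nn x + 1 - 1) * (2 * nn x + 1 - 2) * (2 * nn x + 1 - 4)
  + al2 x t * al0 x t * W2 x * (2 * nn x - 2) * (2 * nn x + 1 - 0) * (2 * nn x + 1 - 1) * (2 * nn x + 1 - 3) * (2 * nn x + 1 - 4)
  + al2 x t * al1 x t * W3 x * (2 * nn x - 3) * (2 * nn x + 1 - 0) * (2 * nn x + 1 - 1) * (2 * nn x + 1 - 2) * (2 * nn x + 1 - 4)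
  + al2 x t * al2 x t * W4 x * (2 * nn x - 4) * (2 * nn x + 1 - 0) * (2 * nn x + 1 - 1) * (2 * nn x + 1 - 2) * (2 * nn x + 1 - 3).
Definition PM (x t : R) : R :=
  al0 x t * al0 x t * ((nn x - 0) ^ 2 * W0 x - 2 * (nn x - 0) * (2 * (nn x - 0) - 1) * W1 x)
  + al0 x t * al1 x t * ((nn x - 0) ^ 2 * W1 x - 2 * (nn x - 0) * (2 * (nn x - 0) - 1) * W2 x)
  + al0 x t * al2 x t * ((nn x - 0) ^ 2 * W2 x - 2 * (nn x - 0) * (2 * (nn x - 0) - 1) * W3 x)
  + al1 x t * al0 x t * ((nn x - 1) ^ 2 * W1 x - 2 * (nn x - 1) * (2 * (nn x - 1) - 1) * W2 x)
  + al1 x t * al1 x t * ((nn x - 1) ^ 2 * W2 x - 2 * (nn x - 1) * (2 * (nn x - 1) - 1) * W3 x)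
  + al1 x t * al2 x t * ((nn x - 1) ^ 2 * W3 x - 2 * (nn x - 1) * (2 * (nn x - 1) - 1) * W4 x)
  + al2 x t * al0 x t * ((nn x - 2) ^ 2 * W2 x - 2 * (nn x - 2) * (2 * (nn x - 2) - 1) * W3 x)
  + al2 x t * al1 x t * ((nn x - 2) ^ 2 * W3 x - 2 * (nn x - 2) * (2 * (nn x - 2) - 1) * W4 x)
  + al2 x t * al2 x t * ((nn x - 2) ^ 2 * W4 x - 2 * (nn x - 2) * (2 * (nn x - 2) - 1) * W5 x).
Definition Gp (x t : R) : R := (PN x t * Fd x + PC x t) * PN x t - 16 * PM x t * (PN x t * Fd x - PC x t).

Ltac posi := match goal with
  | |- 0 <= ?a + ?b => apply Rplus_le_le_0_compat; posi
  | |- 0 <= ?a * (?b ^ ?n) => apply Rmult_le_pos; [posi | apply pow_le; lra]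
  | |- _ => lra
  end.

Lemma G_bern (x t : R) : Gp x t = (let u := x - 7 in 980303042327974980971151753216000 * (1 - t) ^ 4 + 6244027393200859492002774908928000 * t ^ 1 * (1 - t) ^ 3 + 12809823076377460215050845814784000 * t ^ 2 * (1 - t) ^ 2 + 12453218088643017005374918950912000 * t ^ 3 * (1 - t) ^ 1 + 2852668493849089657684382662656000 * t ^ 4 + 2334447569633278665262927498444800 * u ^ 1 * (1 - t) ^ 4 + 14549053798580119638889590580838400 * u ^ 1 * t ^ 1 * (1 - t) ^ 3 + 29858073631386455477877008184115200 * u ^ 1 * t ^ 2 * (1 - t) ^ 2 + 28677412466842555828801981159833600 * u ^ 1 * t ^ 3 * (1 - t) ^ 1 + 6663792354716753090719268334796800 * u ^ 1 * t ^ 4 + 2639460514596484261530953035284480 * u ^ 2 * (1 - t) ^ 4 + 16132135059268115513570025894051840 * u ^ 2 * t ^ 1 * (1 - t) ^ 3 + 33111141356680332640759440495083520 * u ^ 2 * t ^ 2 * (1 - t) ^ 2 + 31437813898611789883736918344335360 * u ^ 2 * t ^ 3 * (1 - t) ^ 1 + 7409395239379825997071213392199680 * u ^ 2 * t ^ 4 + 1884932869274102682398238563106816 * u ^ 3 * (1 - t) ^ 4 + 11321146546006473113599832283414528 * u ^ 3 * t ^ 1 * (1 - t) ^ 3 + 23234707120209249172298514756009984 * u ^ 3 * t ^ 2 * (1 - t) ^ 2 + 21820807930025119643271328660979712 * u ^ 3 * t ^ 3 * (1 - t) ^ 1 + 5215401984081006839490134057926656 * u ^ 3 * t ^ 4 +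 954009316425595384111077366169600 * u ^ 4 * (1 - t) ^ 4 + 5641320348176448459467474261770240 * u ^ 4 * t ^ 1 * (1 - t) ^ 3 + 11574538622001594474445016849448960 * u ^ 4 * t ^ 2 * (1 - t) ^ 2 + 10758300531468325832525420345589760 * u ^ 4 * t ^ 3 * (1 - t) ^ 1 + 2607265520489073533816430794752000 * u ^ 4 * t ^ 4 + 363948439010086937956117668429824 * u ^ 5 * (1 - t) ^ 4 + 2122518460660020933356628454670336 * u ^ 5 * t ^ 1 * (1 - t) ^ 3 + 4352756722958325067898335117049856 * u ^ 5 * t ^ 2 * (1 - t) ^ 2 + 4006429415038048955737754991165440 * u ^ 5 * t ^ 3 * (1 - t) ^ 1 + 984378927282620738090466638888960 * u ^ 5 * t ^ 4 + 108652734662286226618659421290496 * u ^ 6 * (1 - t) ^ 4 + 625933437635172784180033318420480 * u ^ 6 * t ^ 1 * (1 - t) ^ 3 + 1282764475915222706477303182393344 * u ^ 6 * t ^ 2 * (1 - t) ^ 2 + 1169865828069266034359336635924480 * u ^ 6 * t ^ 3 * (1 - t) ^ 1 + 291368912755711995555322315276288 * u ^ 6 * t ^ 4 + 26010096292877380215426027356160 * u ^ 7 * (1 - t) ^ 4 + 148233888542498654529527165681664 * u ^ 7 * t ^ 1 * (1 - t) ^ 3 + 303521734928628289957974290399232 * u ^ 7 * t ^ 2 * (1 - t) ^ 2 + 274419095823828666747997547003904 * u ^ 7 * t ^ 3 * (1 - t) ^ 1 + 69272921770589284653996284362752 * u ^ 7 * t ^ 4 + 5074696391022236262888555282432 * u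 ^ 8 * (1 - t) ^ 4 + 28650470878305140704354649309184 * u ^ 8 * t ^ 1 * (1 - t) ^ 3 + 58602598518061649144951273226240 * u ^ 8 * t ^ 2 * (1 - t) ^ 2 + 52554865356139842927118380662784 * u ^ 8 * t ^ 3 * (1 - t) ^ 1 + 13444491096594311124385658880000 * u ^ 8 * t ^ 4 + 815649278993055626347144347648 * u ^ 9 * (1 - t) ^ 4 + 4567732555004613710423889543168 * u ^ 9 * t ^ 1 * (1 - t) ^ 3 + 9331454211337062333805061210112 * u ^ 9 * t ^ 2 * (1 - t) ^ 2 + 8305199053051551090491226292224 * u ^ 9 * t ^ 3 * (1 - t) ^ 1 + 2152804481778746346858709352448 * u ^ 9 * t ^ 4 + 108711508917901428900495294464 * u ^ 10 * (1 - t) ^ 4 + 604607392710915930053748457472 * u ^ 10 * t ^ 1 * (1 - t) ^ 3 + 1233410604675010427251325927424 * u ^ 10 * t ^ 2 * (1 - t) ^ 2 + 1090042632160215176985365970944 * u ^ 10 * t ^ 3 * (1 - t) ^ 1 + 286261264426578419011193470976 * u ^ 10 * t ^ 4 + 12053030131460056742624886784 * u ^ 11 * (1 - t) ^ 4 + 66648438325125588459782078464 * u ^ 11 * t ^ 1 * (1 - t) ^ 3 + 135747826786714577156160552960 * u ^ 11 * t ^ 2 * (1 - t) ^ 2 + 119187784394613403622241402880 * u ^ 11 * t ^ 3 * (1 - t) ^ 1 + 31707171312431313928969584640 * u ^ 11 * t ^ 4 + 1111715277228390355219251200 * u ^ 12 * (1 - t) ^ 4 + 6118593851210917176248434688 *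 u ^ 12 * t ^ 1 * (1 - t) ^ 3 + 12440197773658139746661105664 * u ^ 12 * t ^ 2 * (1 - t) ^ 2 + 10857127835527968108758368256 * u ^ 12 * t ^ 3 * (1 - t) ^ 1 + 2925432660188189096556560384 * u ^ 12 * t ^ 4 + 85045996514961417863495680 * u ^ 13 * (1 - t) ^ 4 + 466360021376223522830024704 * u ^ 13 * t ^ 1 * (1 - t) ^ 3 + 946356094843655758754611200 * u ^ 13 * t ^ 2 * (1 - t) ^ 2 + 821400243598433868713426944 * u ^ 13 * t ^ 3 * (1 - t) ^ 1 + 224141778262749711766061056 * u ^ 13 * t ^ 4 + 5361438503827264604930048 * u ^ 14 * (1 - t) ^ 4 + 29321256892542105982337024 * u ^ 14 * t ^ 1 * (1 - t) ^ 3 + 59374362991607952884760576 * u ^ 14 * t ^ 2 * (1 - t) ^ 2 + 51278322481342029605371904 * u ^ 14 * t ^ 3 * (1 - t) ^ 1 + 14168985492346821489655808 * u ^ 14 * t ^ 4 + 275598686037098457726976 * u ^ 15 * (1 - t) ^ 4 + 1504591170302014635114496 * u ^ 15 * t ^ 1 * (1 - t) ^ 3 + 3039792838805593290964992 * u ^ 15 * t ^ 2 * (1 - t) ^ 2 + 2613568821096916988723200 * u ^ 15 * t ^ 3 * (1 - t) ^ 1 + 731173925452527129591808 * u ^ 15 * t ^ 4 + 11366787971869870129152 * u ^ 16 * (1 - t) ^ 4 + 62002568041077635284992 * u ^ 16 * t ^ 1 * (1 - t) ^ 3 + 124959875195297758445568 * u ^ 16 * t ^ 2 * (1 - t) ^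 2 + 107012583958325448671232 * u ^ 16 * t ^ 3 * (1 - t) ^ 1 + 30307422349930970480640 * u ^ 16 * t ^ 4 + 367149645274310246400 * u ^ 17 * (1 - t) ^ 4 + 2002729242337128480768 * u ^ 17 * t ^ 1 * (1 - t) ^ 3 + 4025734143787866783744 * u ^ 17 * t ^ 2 * (1 - t) ^ 2 + 3435593766009802063872 * u ^ 17 * t ^ 3 * (1 - t) ^ 1 + 984894463710487117824 * u ^ 17 * t ^ 4 + 8947101997530611712 * u ^ 18 * (1 - t) ^ 4 + 48846505143775002624 * u ^ 18 * t ^ 1 * (1 - t) ^ 3 + 97914015201808613376 * u ^ 18 * t ^ 2 * (1 - t) ^ 2 + 83312716889343393792 * u ^ 18 * t ^ 3 * (1 - t) ^ 1 + 24172415366241189888 * u ^ 18 * t ^ 4 + 154696353258143744 * u ^ 19 * (1 - t) ^ 4 + 845975573850226688 * u ^ 19 * t ^ 1 * (1 - t) ^ 3 + 1690768552212037632 * u ^ 19 * t ^ 2 * (1 - t) ^ 2 + 1435082796421873664 * u ^ 19 * t ^ 3 * (1 - t) ^ 1 + 421361145236946944 * u ^ 19 * t ^ 4 + 1691598639333376 * u ^ 20 * (1 - t) ^ 4 + 9273590306308096 * u ^ 20 * t ^ 1 * (1 - t) ^ 3 + 18476317947199488 * u ^ 20 * t ^ 2 * (1 - t) ^ 2 + 15651313945673728 * u ^ 20 * t ^ 3 * (1 - t) ^ 1 + 4649923794436096 * u ^ 20 * t ^ 4 + 8796093022208 * u ^ 21 * (1 - t) ^ 4 + 48378511622144 * u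 ^ 21 * t ^ 1 * (1 - t) ^ 3 + 96069828476928 * u ^ 21 * t ^ 2 * (1 - t) ^ 2 + 81260781240320 * u ^ 21 * t ^ 3 * (1 - t) ^ 1 + 24425479012352 * u ^ 21 * t ^ 4).
Proof. unfold Gp, PN, PC, PM, Fd, al0, al1, al2, W0, W1, W2, W3, W4, W5, nn. cbv zeta. ring. Qed.

Lemma G_pos (x t : R) : 7 <= x -> 0 <= t <= 1 -> 0 <= Gp x t.
Proof. intros Hx Ht. rewrite (G_bern x t). cbv zeta. posi. Qed.

Lemma PN_bern (x t : R) : PN x t - 1 = (let u := x - 7 in 756331051714559 * (1 - t) ^ 2 + 2163490582026238 * t ^ 1 * (1 - t) ^ 1 + 1552339345530239 * t ^ 2 + 764624503085056 * u ^ 1 * (1 - t) ^ 2 + 2178008811828224 * u ^ 1 * t ^ 1 * (1 - t) ^ 1 + 1554940872639424 * u ^ 1 * t ^ 2 + 343304578570240 * u ^ 2 * (1 - t) ^ 2 + 973724346790400 * u ^ 2 * t ^ 1 * (1 - t) ^ 1 + 691734272083840 * u ^ 2 * t ^ 2 + 89847579022848 * u ^ 3 * (1 - t) ^ 2 + 253738927613184 * u ^ 3 * t ^ 1 * (1 - t) ^ 1 + 179377107057600 * u ^ 3 * t ^ 2 + 15105224638336 * u ^ 4 * (1 - t) ^ 2 + 42473109290240 * u ^ 4 * t ^ 1 * (1 - t) ^ 1 + 29881289724928 * u ^ 4 * t ^ 2 + 1691754004224 * u ^ 5 * (1 - t) ^ 2 + 4736032055040 * u ^ 5 * t ^ 1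 * (1 - t) ^ 1 + 3316156084992 * u ^ 5 * t ^ 2 + 126222671744 * u ^ 6 * (1 - t) ^ 2 + 351797093632 * u ^ 6 * t ^ 1 * (1 - t) ^ 1 + 245176112000 * u ^ 6 * t ^ 2 + 6049706496 * u ^ 7 * (1 - t) ^ 2 + 16786338816 * u ^ 7 * t ^ 1 * (1 - t) ^ 1 + 11644979712 * u ^ 7 * t ^ 2 + 169017344 * u ^ 8 * (1 - t) ^ 2 + 466886656 * u ^ 8 * t ^ 1 * (1 - t) ^ 1 + 322420736 * u ^ 8 * t ^ 2 + 2097152 * u ^ 9 * (1 - t) ^ 2 + 5767168 * u ^ 9 * t ^ 1 * (1 - t) ^ 1 + 3964928 * u ^ 9 * t ^ 2).
Proof. unfold Gp, PN, PC, PM, Fd, al0, al1, al2, W0, W1, W2, W3, W4, W5, nn. cbv zeta. ring. Qed.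

Lemma PN_pos (x t : R) : 7 <= x -> 0 <= t <= 1 -> 0 <= PN x t - 1.
Proof. intros Hx Ht. rewrite (PN_bern x t). cbv zeta. posi. Qed.

Lemma GAP_bern (x t : R) : PN x t * Fd x - PC x t - 1 = (let u := x - 7 in 110652730950356582399 * (1 - t) ^ 2 + 291309836167803801598 * t ^ 1 * (1 - t) ^ 1 + 193728403554960153599 * t ^ 2 + 157131360547617300480 * u ^ 1 * (1 - t) ^ 2 + 415295877088340305920 * u ^ 1 * t ^ 1 * (1 - t) ^ 1 + 276806743410706513920 * u ^ 1 * t ^ 2 + 102932336456546893824 * u ^ 2 * (1 - t) ^ 2 + 273090154767231169536 * u ^ 2 * t ^ 1 * (1 - t) ^ 1 + 182444017696716101376 * u ^ 2 * t ^ 2 + 41185321259420487680 * u ^ 3 * (1 - t) ^ 2 + 109676643629061531136 * u ^ 3 * t ^ 1 * (1 - t) ^ 1 + 73445535718978364672 * u ^ 3 * t ^ 2 + 11230115548342674432 * u ^ 4 * (1 - t) ^ 2 + 30014544455650635264 * u ^ 4 * t ^ 1 * (1 - t) ^ 1 + 20148061606917718272 * u ^ 4 * t ^ 2 + 2203647087790654976 * u ^ 5 * (1 - t) ^ 2 + 5910499121818127872 * u ^ 5 * t ^ 1 * (1 - t) ^ 1 + 3977388115164169472 * u ^ 5 * t ^ 2 + 320147834274923008 * u ^ 6 * (1 - t) ^ 2 + 861641161359784448 * u ^ 6 * t ^ 1 * (1 - t) ^ 1 + 581291555413210624 * u ^ 6 * t ^ 2 + 34866284991824384 * u ^ 7 *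 (1 - t) ^ 2 + 94153169546306560 * u ^ 7 * t ^ 1 * (1 - t) ^ 1 + 63682066548830720 * u ^ 7 * t ^ 2 + 2846480043039232 * u ^ 8 * (1 - t) ^ 2 + 7711714838537216 * u ^ 8 * t ^ 1 * (1 - t) ^ 1 + 5229594854205952 * u ^ 8 * t ^ 2 + 172053555249152 * u ^ 9 * (1 - t) ^ 2 + 467606682787840 * u ^ 9 * t ^ 1 * (1 - t) ^ 1 + 317945214464000 * u ^ 9 * t ^ 2 + 7484091947008 * u ^ 10 * (1 - t) ^ 2 + 20402889199616 * u ^ 10 * t ^ 1 * (1 - t) ^ 1 + 13910307543040 * u ^ 10 * t ^ 2 + 221856014336 * u ^ 11 * (1 - t) ^ 2 + 606626136064 * u ^ 11 * t ^ 1 * (1 - t) ^ 1 + 414722859008 * u ^ 11 * t ^ 2 + 4017094656 * u ^ 12 * (1 - t) ^ 2 + 11015946240 * u ^ 12 * t ^ 1 * (1 - t) ^ 1 + 7552106496 * u ^ 12 * t ^ 2 + 33554432 * u ^ 13 * (1 - t) ^ 2 + 92274688 * u ^ 13 * t ^ 1 * (1 - t) ^ 1 + 63438848 * u ^ 13 * t ^ 2).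
Proof. unfold Gp, PN, PC, PM, Fd, al0, al1, al2, W0, W1, W2, W3, W4, W5, nn. cbv zeta. ring. Qed.

Lemma GAP_pos (x t : R) : 7 <= x -> 0 <= t <= 1 -> 0 <= PN x t * Fd x - PC x t - 1.
Proof. intros Hx Ht. rewrite (GAP_bern x t). cbv zeta. posi. Qed.

Lemma E0_bern (x t : R) : (10 * nn x - 19) * PN x 0 * Fd x - (10 * nn x - 14) * PC x 0 = (let u := x - 7 in 281786518926917222400 + 396852032315587092480 * u ^ 1 + 257770107931010433024 * u ^ 2 + 102245901786159288320 * u ^ 3 + 27632401138772319232 * u ^ 4 + 5372991270139618816 * u ^ 5 + 773345675950576128 * u ^ 6 + 83423362941100544 * u ^ 7 + 6744653691433472 * u ^ 8 + 403641594396672 * u ^ 9 + 17380573247488 * u ^ 10 + 509919502336 * u ^ 11 + 9136111616 * u ^ 12 + 75497472 * u ^ 13).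
Proof. unfold Gp, PN, PC, PM, Fd, al0, al1, al2, W0, W1, W2, W3, W4, W5, nn. cbv zeta. ring. Qed.

Lemma E0_pos (x t : R) : 7 <= x -> 0 <= t <= 1 -> 0 <= (10 * nn x - 19) * PN x 0 * Fd x - (10 * nn x - 14) * PC x 0.
Proof. intros Hx Ht. rewrite (E0_bern x t). cbv zeta. posi. Qed.

Lemma E1_bern (x t : R) : (10 * nn x - 4) * PC x 1 - (10 * nn x - 9) * PN x 1 * Fd x = (let u := x - 7 in 355205264040737510400 + 505287397882035578880 * u ^ 1 + 331552691061085611264 * u ^ 2 + 132872666807604201728 * u ^ 3 + 36285892447807655168 * u ^ 4 + 7130575217486661888 * u ^ 5 + 1037364140785642496 * u ^ 6 + 113123900866480640 * u ^ 7 + 9246885539916288 * u ^ 8 + 559578448998400 * u ^ 9 + 24367924787200 * u ^ 10 + 723112108032 * u ^ 11 + 13106151424 * u ^ 12 + 109576192 * u ^ 13).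
Proof. unfold Gp, PN, PC, PM, Fd, al0, al1, al2, W0, W1, W2, W3, W4, W5, nn. cbv zeta. ring. Qed.

Lemma E1_pos (x t : R) : 7 <= x -> 0 <= t <= 1 -> 0 <= (10 * nn x - 4) * PC x 1 - (10 * nn x - 9) * PN x 1 * Fd x.
Proof. intros Hx Ht. rewrite (E1_bern x t). cbv zeta. posi. Qed.



Lemma c_next M : c (S M) = 2 * (2 * INR M + 1) / INR (S M) * c M.
Proof.
  assert (H := c_ratio M). assert (0 < INR (S M)) by (apply lt_0_INR; lia).
  apply (Rmult_eq_reg_l (INR (S M))); [|lra]. rewrite H. field. lra.
Qed.

Lemma d_val M : bn M 1 = INR M / INR (S M) * c M.
Proof.
  assert (H := d_ratio M). assert (0 < INR (S M)) by (apply lt_0_INR; lia).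
  apply (Rmult_eq_reg_l (INR (S M))); [|lra]. rewrite H. field. lra.
Qed.

Definition yv (m : nat) (t : R) : Z -> R :=
  comb3 (al0 (INR m) t) (al1 (INR m) t) (al2 (INR m) t) (bn (S (S (S m)))) (bn (S (S m))) (bn (S m)).

Ltac natnorm := repeat (rewrite ?Nat.add_succ_l, ?Nat.add_succ_r).

Lemma X_val m t : Zs (S (S (S (S m)))) (fun k => yv m t k ^ 2) * W5 (INR m)
  = c (S (m + m)) * PN (INR m) t.
Proof.
  unfold yv. rewrite comb3_sq, !gram0 by lia.
  natnorm.
  rewrite !c_next. rewrite !S_INR, plus_INR.
  set (x := INR m). set (K := c (S (m + m))).
  assert (0 <= x) by apply pos_INR.
  unfold PN, W0, W1, W2, W3, W4, W5, nn.
  field. repeat split; lra.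
Qed.

Lemma Y_val m t : Zs (S (S (S (S m)))) (fun k => yv m t k * yv m t (k + 1)%Z) * W5 (INR m) * Fd (INR m)
  = c (S (m + m)) * PC (INR m) t.
Proof.
  unfold yv. rewrite comb3_sh, !gram1 by lia.
  natnorm.
  rewrite !d_val. rewrite !c_next. rewrite !S_INR, plus_INR.
  set (x := INR m). set (K := c (S (m + m))).
  assert (0 <= x) by apply pos_INR.
  unfold PC, Fd, W0, W1, W2, W3, W4, W5, nn.
  field. repeat split; lra.
Qed.

Lemma M_val m t : Zs (S (S (S (S m)))) (fun k => IZR k ^ 2 * yv m t k ^ 2) * W5 (INR m)
  = c (S (m + m)) * PM (INR m) t.
Proof.
  unfold yv. rewrite comb3_k, !gramK by lia.
  natnorm.
  rewrite !c_next. rewrite !S_INR, plus_INR.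
  set (x := INR m). set (K := c (S (m + m))).
  assert (0 <= x) by apply pos_INR.
  unfold PM, W0, W1, W2, W3, W4, W5, nn.
  field. repeat split; lra.
Qed.


Lemma W5_pos x : 7 <= x -> 0 < W5 x.
Proof. intros H. unfold W5, nn. repeat apply Rmult_lt_0_compat; lra. Qed.

Lemma Fd_pos x : 7 <= x -> 0 < Fd x.
Proof. intros H. unfold Fd, nn. repeat apply Rmult_lt_0_compat; lra. Qed.

Lemma part3_point (m : nat) (s2 tau : R) :
  (7 <= m)%nat -> tau = 1 / sqrt (1 + s2) -> tau < 1 ->
  10 * nn (INR m) - 19 <= tau * (10 * nn (INR m) - 14) ->
  tau * (10 * nn (INR m) - 4) <= 10 * nn (INR m) - 9 ->
  exists T, time_spreads s2 T /\ T * (16 * (1 - tau)) <= 1 + tau.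
Proof.
  intros Hm Htau Ht1 H0 H1.
  set (x := INR m) in *.
  assert (Hx : 7 <= x) by (unfold x; replace 7 with (INR 7) by (simpl; lra); apply le_INR; lia).
  assert (HW := W5_pos x Hx). assert (HF := Fd_pos x Hx).
  assert (Hn : 7 <= nn x) by (unfold nn; lra).
  destruct (IVT_cor (fun t => PC x t - tau * Fd x * PN x t) 0 1) as [t [Ht Hf]].
  - unfold PC, PN, Fd, W0, W1, W2, W3, W4, W5, al0, al1, al2. reg.
  - lra.
  - assert (E0 := E0_pos x 0 Hx ltac:(lra)).
    assert (E1 := E1_pos x 0 Hx ltac:(lra)).
    assert (P0 := PN_pos x 0 Hx ltac:(lra)).
    assert (P1 := PN_pos x 1 Hx ltac:(lra)).
    assert (A0 : PC x 0 - tau * Fd x * PN x 0 <= 0).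
    { assert (Q : (10 * nn x - 14) * (PC x 0 - tau * Fd x * PN x 0)
               <= PN x 0 * Fd x * ((10 * nn x - 19) - tau * (10 * nn x - 14))) by nra.
      assert (Q2 : PN x 0 * Fd x * ((10 * nn x - 19) - tau * (10 * nn x - 14)) <= 0).
      { assert (0 < PN x 0 * Fd x) by (apply Rmult_lt_0_compat; lra). nra. }
      nra. }
    assert (A1 : 0 <= PC x 1 - tau * Fd x * PN x 1).
    { assert (Q : (10 * nn x - 4) * (PC x 1 - tau * Fd x * PN x 1)
               >= PN x 1 * Fd x * ((10 * nn x - 9) - tau * (10 * nn x - 4))) by nra.
      assert (Q2 : 0 <= PN x 1 * Fd x * ((10 * nn x - 9) - tau * (10 * nn x - 4))).
      { assert (0 < PN x 1 * Fd x) by (apply Rmult_lt_0_compat; lra). nra. }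
      nra. }
    nra.
  - simpl in Hf.
    assert (HPN := PN_pos x t Hx Ht).
    assert (HG := G_pos x t Hx Ht).
    assert (HK := c_pos (S (m + m))).
    set (K := c (S (m + m))) in *.
    assert (XV := X_val m t). assert (YV := Y_val m t). assert (MV := M_val m t).
    fold x in XV, YV, MV. fold K in XV, YV, MV.
    set (X := Zs (S (S (S (S m)))) (fun k => yv m t k ^ 2)) in *.
    set (Y := Zs (S (S (S (S m)))) (fun k => yv m t k * yv m t (k + 1)%Z)) in *.
    set (Mk := Zs (S (S (S (S m)))) (fun k => IZR k ^ 2 * yv m t k ^ 2)) in *.
    assert (HPC : PC x t = tau * Fd x * PN x t) by lra.
    assert (HX : X = K * PN x t / W5 x) by (apply (Rmult_eq_reg_r (W5 x)); [rewrite XV; field|]; lra).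
    assert (HY : Y = tau * X).
    { rewrite HX. apply (Rmult_eq_reg_r (W5 x * Fd x)); [|nra].
      replace (Y * (W5 x * Fd x)) with (Y * W5 x * Fd x) by ring. rewrite YV, HPC. field. lra. }
    assert (HM : Mk = K * PM x t / W5 x) by (apply (Rmult_eq_reg_r (W5 x)); [rewrite MV; field|]; lra).
    assert (HXp : 0 < X).
    { rewrite HX. apply Rdiv_lt_0_compat; [apply Rmult_lt_0_compat|]; lra. }
    exists (Mk / X). split.
    + apply realize.
      * apply comb3_support; lia.
      * exact HXp.
      * fold Y X. rewrite HY, Htau. ring.
    + unfold Gp in HG. rewrite HPC in HG.
      assert (Ek : Mk / X = PM x t / PN x t).
      { rewrite HM, HX. field. repeat split; lra. }
      rewrite Ek.
      assert (HG2 : 0 <= Fd x * (PN x t) ^ 2 * ((1 + tau) - 16 * (PM x t / PN x t) * (1 - tau))).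
      { replace (Fd x * (PN x t) ^ 2 * ((1 + tau) - 16 * (PM x t / PN x t) * (1 - tau)))
          with ((PN x t * Fd x + tau * Fd x * PN x t) * PN x t -
                16 * PM x t * (PN x t * Fd x - tau * Fd x * PN x t)) by (field; lra).
        exact HG. }
      assert (0 < Fd x * (PN x t) ^ 2) by (apply Rmult_lt_0_compat; [lra| apply pow_lt; lra]).
      assert (0 <= (1 + tau) - 16 * (PM x t / PN x t) * (1 - tau)).
      { apply (Rmult_le_reg_l (Fd x * PN x t ^ 2)); [lra|]. rewrite Rmult_0_r. exact HG2. }
      lra.
Qed.


Theorem theorem3 :
  (forall s2 : R, 0 < s2 -> exists v : R, V_is s2 v) /\
  (forall s2 v : R, 0 < s2 -> V_is s2 v ->
     s2 * v >= s2 * (1 - sqrt (s2 / (1 + s2)))) /\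
  (exists s0 : R, 0 < s0 /\
     forall s2 v : R, 0 < s2 -> s2 <= s0 -> V_is s2 v ->
       s2 * v <= s2 / 8 *
         (sqrt (1 + s2) / (sqrt (1 + s2) - 1) - 1 / 2)).
Proof.
  split; [|split].
  -
    intros s2 Hs2.
    set (E := fun u => time_spreads s2 (- u)).
    destruct (completeness E) as [mm [Hub Hlub]].
    + exists 0. intros u Hu. destruct Hu as [x [_ [_ H3]]].
      assert (H := spread_nonneg x (- u) H3). lra.
    + destruct (exists_ts s2 Hs2) as [t Ht]. exists (- t). unfold E. rewrite Ropp_involutive. exact Ht.
    + exists (- mm). split.
      * intros t Ht. assert (E (- t)) by (unfold E; rewrite Ropp_involutive; exact Ht).
        assert (H1 := Hub _ H). lra.
      * intros b Hb. assert (H : mm <= - b).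
        { apply Hlub. intros u Hu. assert (H2 := Hb _ Hu). lra. }
        lra.
  -
    intros s2 v Hs2 [Hv1 Hv2].
    set (s := sqrt (s2 / (1 + s2))).
    assert (Hs0 : 0 < s) by (apply sqrt_lt_R0; apply Rdiv_lt_0_compat; lra).
    assert (Hss : s ^ 2 = s2 / (1 + s2)) by (apply pow2_sqrt; apply Rlt_le, Rdiv_lt_0_compat; lra).
    set (cc := 1 / sqrt (1 + s2)).
    assert (Hq : 0 < sqrt (1 + s2)) by (apply sqrt_lt_R0; lra).
    assert (Hqq : sqrt (1 + s2) ^ 2 = 1 + s2) by (apply pow2_sqrt; lra).
    assert (Hc0 : 0 < cc) by (unfold cc; apply Rdiv_lt_0_compat; lra).
    assert (Hcc : cc ^ 2 = 1 / (1 + s2)).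
    { unfold cc. unfold Rdiv. rewrite Rpow_mult_distr, pow_inv, Hqq. ring. }
    assert (Hsum : cc ^ 2 + s ^ 2 = 1) by (rewrite Hcc, Hss; field; lra).
    assert (L : 1 - s <= v).
    { apply Hv2. intros T [x [H1 [H2 H3]]].
      assert (A := lower_x0 x cc cc s H1 H2 Hc0 ltac:(lra) Hsum).
      assert (B := spread_ge x T H1 H3).
      assert (s * x 0%Z ^ 2 <= s * s) by nra.
      assert (x 0%Z ^ 2 <= s) by (apply (Rmult_le_reg_l s); lra).
      lra. }
    fold s. apply Rle_ge. apply Rmult_le_compat_l; lra.
  -
    exists (1 / 10). split; [lra|].
    intros s2 v Hs2 Hs0 [Hv1 Hv2].
    set (q := sqrt (1 + s2)).
    assert (Hq0 : 0 <= q) by apply sqrt_pos.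
    assert (Hqq : q ^ 2 = 1 + s2) by (apply pow2_sqrt; lra).
    assert (Hq1 : 1 < q) by nra.
    assert (Hq2 : q <= 86 / 81) by nra.
    set (tau := 1 / q).
    assert (Htau : tau = 1 / sqrt (1 + s2)) by reflexivity.
    assert (Htq : tau * q = 1) by (unfold tau; field; lra).
    assert (Ht1 : tau < 1) by nra.
    assert (Htp : 0 < tau) by (unfold tau; apply Rdiv_lt_0_compat; lra).
    assert (0 <= tau * (86 / 81 - q)) by (apply Rmult_le_pos; lra).
    assert (Ht0 : 81 / 86 <= tau) by nra.
    set (w := 5 / (1 - tau)).
    assert (Hw : w * (1 - tau) = 5) by (unfold w; field; lra).
    assert (Hw86 : 86 <= w) by nra.
    set (z := (w + 14) / 10).
    destruct (archimed z) as [Hz1 Hz2].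
    assert (Hz10 : 10 <= z) by (unfold z; lra).
    set (m := Z.to_nat (up z - 4)).
    assert (Hup : (10 < up z)%Z) by (apply lt_IZR; lra).
    assert (Hmx : INR m = IZR (up z) - 4).
    { unfold m. rewrite INR_IZR_INZ, Z2Nat.id by lia. rewrite minus_IZR. reflexivity. }
    assert (Hm7 : (7 <= m)%nat) by (unfold m; lia).
    assert (Hn : nn (INR m) = IZR (up z) - 1) by (unfold nn; rewrite Hmx; ring).
    destruct (part3_point m s2 tau Hm7 Htau Ht1) as [T [HT HTi]].
    + rewrite Hn. unfold z in *. nra.
    + rewrite Hn. unfold z in *. nra.
    + assert (HvT := Hv1 T HT).
      assert (HTb : T <= (1 + tau) / (16 * (1 - tau))).
      { apply (Rmult_le_reg_r (16 * (1 - tau))); [lra|]. field_simplify; [|lra]. lra. }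
      assert (Eq : (1 + tau) / (16 * (1 - tau)) = 1 / 8 * (q / (q - 1) - 1 / 2)).
      { unfold tau. field. split; lra. }
      fold q.
      replace (s2 / 8 * (q / (q - 1) - 1 / 2)) with (s2 * (1 / 8 * (q / (q - 1) - 1 / 2))) by (field; lra).
      apply Rmult_le_compat_l; lra.
Qed.
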